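(* Fix $a \geq 0$ and let $\mathfrak{g} = \mathfrak{r}'_{3,a}$, the three-dimensional Lie algebra with basis $\{e_1,e_2,e_3\}$ and nonzero brackets $[e_1,e_2]=ae_2-e_3$, $[e_1,e_3]=e_2+ae_3$. For every inner product $\langle\cdot,\cdot\rangle$ on $\mathfrak{g}$, there exist $\lambda \geq 1$, $k > 0$, and an orthonormal basis $\{x_1, x_2, x_3\}$ with respect to $k \langle\cdot,\cdot\rangle$ such that the bracket relations are given by \[ [x_1,x_2] = a x_2 - \lambda x_3 , \quad [x_1,x_3] = (1/\lambda) x_2 + a x_3 \] (and $[x_2,x_3]=0$). Furthermore, the matrix expression of the derivation algebra $\mathrm{Der}(\mathfrak{g})$ with respect to $\{x_1, x_2, x_3\}$ coincides with \[ \left\{ \begin{pmatrix} 0 & 0 & 0 \\ x_{21} & x_{22} & x_{23} \\ x_{31} & -\lambda^2 x_{23} & x_{22} \end{pmatrix} \;\middle|\; x_{21}, x_{22}, x_{23}, x_{31} \in \mathbb{R} \right\}. \] *)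

(* Defs.v *)
(* The real Lie algebra r'_{3,a} is modelled on 'rV[R]_3
   (R : realType), with standard basis e1,e2,e3 = rows delta_mx 0 i0/i1/i2. *)
From HB Require Import structures.
From mathcomp Require Import all_boot all_order all_algebra.
From mathcomp Require Import reals.
Set Implicit Arguments. Unset Strict Implicit. Unset Printing Implicit Defensive.
Import Order.TTheory GRing.Theory Num.Theory.
Local Open Scope ring_scope.

Definition i0 : 'I_3 := @Ordinal 3 0 isT.
Definition i1 : 'I_3 := @Ordinal 3 1 isT.
Definition i2 : 'I_3 := @Ordinal 3 2 isT.

Section R3a.
Variable R : realType.

Definition ebasis (i : 'I_3) : 'rV[R]_3 := delta_mx 0 i.

Definition r3a_br (a : R) (i j : 'I_3) : 'rV[R]_3 :=
  match nat_of_ord i, nat_of_ord j with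
  | 0, 1 => a *: ebasis i1 - ebasis i2
  | 1, 0 => - (a *: ebasis i1 - ebasis i2)
  | 0, 2 => ebasis i1 + a *: ebasis i2
  | 2, 0 => - (ebasis i1 + a *: ebasis i2)
  | _, _ => 0
  end.

Definition r3a_bracket (a : R) (u v : 'rV[R]_3) : 'rV[R]_3 :=
  \sum_(i < 3) \sum_(j < 3) (u 0 i * v 0 j) *: r3a_br a i j.

Definition is_inner_product (ip : 'rV[R]_3 -> 'rV[R]_3 -> R) : Prop :=
  (forall (c : R) u v w, ip (c *: u + v) w = c * ip u w + ip v w) /\
  (forall u v, ip u v = ip v u) /\
  (forall u, u != 0 -> 0 < ip u u).

Definition is_derivation (br : 'rV[R]_3 -> 'rV[R]_3 -> 'rV[R]_3)
  (D : 'rV[R]_3 -> 'rV[R]_3) : Prop :=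
  (forall (c : R) u v, D (c *: u + v) = c *: D u + D v) /\
  (forall u v, D (br u v) = br (D u) v + br u (D v)).

Definition der_mat (lam x21 x22 x23 x31 : R) : 'M[R]_3 :=
  \matrix_(i < 3, j < 3)
    match nat_of_ord i, nat_of_ord j with
    | 1, 0 => x21 | 1, 1 => x22 | 1, 2 => x23
    | 2, 0 => x31 | 2, 1 => - (lam ^+ 2 * x23) | 2, 2 => x22
    | _, _ => 0
    end.

End R3a.

(* Main.v *)
Require Import Defs.
From HB Require Import structures.
From mathcomp Require Import all_boot all_order all_algebra.
From mathcomp Require Import reals.
From mathcomp Require Import ring lra.
Import Order.TTheory GRing.Theory Num.Theory.
Local Open Scope ring_scope.
Set Implicit Arguments. Unset Strict Implicit.

Section S.
Variable R : realType.

Definition vec3 (p q r : R) : 'rV[R]_3 := \row_(j < 3) nth 0 [:: p; q; r] j.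

Lemma ord3 (j : 'I_3) : j = i0 \/ j = i1 \/ j = i2.
Proof.
case: j => [[|[|[|j]]] hj]; [left|right;left|right;right|by []]; exact: val_inj.
Qed.

Lemma vec3E (u : 'rV[R]_3) : u = vec3 (u 0 i0) (u 0 i1) (u 0 i2).
Proof. by apply/rowP => j; rewrite mxE; case: (ord3 j) => [->|[->|->]]. Qed.

Lemma vec3_eq p q r p' q' r' : p = p' -> q = q' -> r = r' -> vec3 p q r = vec3 p' q' r'.
Proof. by move=> -> -> ->. Qed.

Lemma vec3_0 p q r : vec3 p q r = 0 -> [/\ p = 0, q = 0 & r = 0].
Proof.
move=> h; split.
- by have := congr1 (fun v : 'rV[R]_3 => v 0 i0) h; rewrite !mxE.
- by have := congr1 (fun v : 'rV[R]_3 => v 0 i1) h; rewrite !mxE.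
- by have := congr1 (fun v : 'rV[R]_3 => v 0 i2) h; rewrite !mxE.
Qed.

Lemma vec3D p q r p' q' r' : vec3 p q r + vec3 p' q' r' = vec3 (p + p') (q + q') (r + r').
Proof. by apply/rowP => j; rewrite !mxE; case: (ord3 j) => [->|[->|->]]. Qed.
Lemma vec3Z c p q r : c *: vec3 p q r = vec3 (c * p) (c * q) (c * r).
Proof. by apply/rowP => j; rewrite !mxE; case: (ord3 j) => [->|[->|->]]. Qed.
Lemma vec3N p q r : - vec3 p q r = vec3 (- p) (- q) (- r).
Proof. by apply/rowP => j; rewrite !mxE; case: (ord3 j) => [->|[->|->]]. Qed.
Lemma vec30 : 0 = vec3 0 0 0 :> 'rV[R]_3.
Proof. by apply/rowP => j; rewrite !mxE; case: (ord3 j) => [->|[->|->]]. Qed.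
Lemma ebasisE (i : 'I_3) : @ebasis R i = vec3 (i == i0)%:R (i == i1)%:R (i == i2)%:R.
Proof. apply/rowP => j; rewrite !mxE; case: (ord3 j) => [->|[->|->]] /=; case: (ord3 i) => [->|[->|->]] //. Qed.

Lemma sum3 (F : 'I_3 -> 'rV[R]_3) : \sum_(i < 3) F i = F i0 + F i1 + F i2.
Proof. rewrite !big_ord_recr big_ord0 /= add0r. congr (F _ + F _ + F _); exact: val_inj. Qed.

Lemma br_vec3 a p q r p' q' r' :
  r3a_bracket a (vec3 p q r) (vec3 p' q' r') =
  vec3 0 (a * (p * q' - q * p') + (p * r' - r * p'))
         (- (p * q' - q * p') + a * (p * r' - r * p')).
Proof.
rewrite /r3a_bracket !sum3 /r3a_br /= !ebasisE /= !mxE /=.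
rewrite !(vec3Z, vec3D, vec3N, scaler0).
rewrite !(addr0, add0r) !vec3D.
apply: vec3_eq; ring.
Qed.
Lemma brE (a : R) (u v : 'rV[R]_3) : r3a_bracket a u v =
  vec3 0 (a * (u 0 i0 * v 0 i1 - u 0 i1 * v 0 i0) + (u 0 i0 * v 0 i2 - u 0 i2 * v 0 i0))
         (- (u 0 i0 * v 0 i1 - u 0 i1 * v 0 i0) + a * (u 0 i0 * v 0 i2 - u 0 i2 * v 0 i0)).
Proof. by rewrite {1}[u]vec3E {1}[v]vec3E br_vec3. Qed.

Lemma brDl (a : R) u v w : r3a_bracket a (u + v) w = r3a_bracket a u w + r3a_bracket a v w.
Proof. rewrite !brE vec3D; apply: vec3_eq; rewrite ?mxE; ring. Qed.
Lemma brDr (a : R) u v w : r3a_bracket a w (u + v) = r3a_bracket a w u + r3a_bracket a w v.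
Proof. rewrite !brE vec3D; apply: vec3_eq; rewrite ?mxE; ring. Qed.
Lemma brZl (a : R) c u w : r3a_bracket a (c *: u) w = c *: r3a_bracket a u w.
Proof. rewrite !brE vec3Z; apply: vec3_eq; rewrite ?mxE; ring. Qed.
Lemma brZr (a : R) c u w : r3a_bracket a w (c *: u) = c *: r3a_bracket a w u.
Proof. rewrite !brE vec3Z; apply: vec3_eq; rewrite ?mxE; ring. Qed.
Lemma brNr (a : R) u w : r3a_bracket a w u = - r3a_bracket a u w.
Proof. rewrite !brE vec3N; apply: vec3_eq; ring. Qed.
Lemma brnn (a : R) u : r3a_bracket a u u = 0.
Proof. rewrite brE vec30; apply: vec3_eq; ring. Qed.

Lemma der_back (a lam : R) (x : 'I_3 -> 'rV[R]_3) (hl : lam != 0)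
 (h10 : x i0 0 i0 = 1) (h20 : x i1 0 i0 = 0) (h30 : x i2 0 i0 = 0)
 (h31 : x i2 0 i1 = - (x i1 0 i2) / lam) (h32 : x i2 0 i2 = x i1 0 i1 / lam)
 x21 x22 x23 x31 :
 exists D, is_derivation (r3a_bracket a) D /\
   forall j, D (x j) = \sum_(i < 3) der_mat lam x21 x22 x23 x31 i j *: x i.
Proof.
pose p := x22; pose q := lam * x23.
pose y := x21 *: x i1 + x31 *: x i2.
pose al := x i0 0 i1; pose be := x i0 0 i2.
pose w1 := y 0 i1 - p * al - q * be.
pose w2 := y 0 i2 - p * be + q * al.
exists (fun v => vec3 0 (v 0 i0 * w1 + p * v 0 i1 + q * v 0 i2)
                       (v 0 i0 * w2 + p * v 0 i2 - q * v 0 i1)).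
split; first split.
- move=> c u v; rewrite vec3Z vec3D; apply: vec3_eq; rewrite ?mxE; ring.
- move=> u v; rewrite !brE vec3D; apply: vec3_eq; rewrite ?mxE /=; ring.
move=> j; rewrite sum3 !mxE /=.
case: (ord3 j) => [->|[->|->]] /=; apply/rowP => l;
  rewrite /w1 /w2 /y /al /be /p /q !mxE; case: (ord3 l) => [->|[->|->]] /=;
  rewrite ?h10 ?h20 ?h30 ?h31 ?h32; first [ring | (field; exact: hl)].
Qed.
Lemma der_fwd (a lam k : R) (ip : 'rV[R]_3 -> 'rV[R]_3 -> R)
  (hip1 : forall (c : R) u v w, ip (c *: u + v) w = c * ip u w + ip v w)
  (x : 'I_3 -> 'rV[R]_3) (hl : lam != 0)
  (horth : forall i j, k * ip (x i) (x j) = (i == j)%:R)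
  (hb12 : r3a_bracket a (x i0) (x i1) = a *: x i1 - lam *: x i2)
  (hb13 : r3a_bracket a (x i0) (x i2) = lam^-1 *: x i1 + a *: x i2)
  (hb23 : r3a_bracket a (x i1) (x i2) = 0)
  (M : 'M[R]_3) (D : 'rV[R]_3 -> 'rV[R]_3)
  (hD : is_derivation (r3a_bracket a) D)
  (hM : forall j, D (x j) = \sum_(i < 3) M i j *: x i) :
  exists x21 x22 x23 x31 : R, M = der_mat lam x21 x22 x23 x31.
Proof.
case: hD => hDl hDb.
have ip0 w : ip 0 w = 0.
  have := hip1 1 0 0 w; rewrite scaler0 addr0 mul1r => h.
  by apply: (addrI (ip 0 w)); rewrite addr0 -h.
have ipD u v w : ip (u + v) w = ip u w + ip v w.
  by rewrite -(scale1r u) hip1 mul1r scale1r.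
have ipZ c u w : ip (c *: u) w = c * ip u w.
  by rewrite -(addr0 (c *: u)) hip1 ip0 addr0.
have ipN u w : ip (- u) w = - ip u w.
  by rewrite -scaleN1r ipZ mulN1r.
have D0 : D 0 = 0.
  have := hDl 1 0 0; rewrite scaler0 addr0 scale1r => h.
  by apply: (addrI (D 0)); rewrite addr0 -h.
have DD u v : D (u + v) = D u + D v.
  have := hDl 1 u v; rewrite !scale1r; exact.
have DZ c u : D (c *: u) = c *: D u.
  by rewrite -(addr0 (c *: u)) hDl D0 addr0.
have DN u : D (- u) = - D u.
  by rewrite -scaleN1r DZ scaleN1r.
pose crd l v := k * ip v (x l).
have crdD l u v : crd l (u + v) = crd l u + crd l v by rewrite /crd ipD mulrDr.
have crdZ l c u : crd l (c *: u) = c * crd l u by rewrite /crd ipZ mulrCA.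
have crdN l u : crd l (- u) = - crd l u by rewrite /crd ipN mulrN.
have crd0 l : crd l 0 = 0 by rewrite /crd ip0 mulr0.
have crdx i l : crd l (x i) = (i == l)%:R by rewrite /crd horth.
have hM' j : D (x j) = M i0 j *: x i0 + M i1 j *: x i1 + M i2 j *: x i2.
  by rewrite hM sum3.
have b11 := brnn a (x i0). have b22 := brnn a (x i1). have b33 := brnn a (x i2).
have b21 : r3a_bracket a (x i1) (x i0) = - (a *: x i1 - lam *: x i2) by rewrite brNr hb12.
have b31 : r3a_bracket a (x i2) (x i0) = - (lam^-1 *: x i1 + a *: x i2) by rewrite brNr hb13.
have b32 : r3a_bracket a (x i2) (x i1) = 0 by rewrite brNr hb23 oppr0.
have E23 := hDb (x i1) (x i2).
have E12 := hDb (x i0) (x i1).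
have E13 := hDb (x i0) (x i2).
rewrite hb23 D0 !hM' !(brDl, brDr, brZl, brZr) ?(b11, b22, b33, b21, b31, b32, hb12, hb13, hb23) in E23.
rewrite hb12 ?(DD, DN, DZ) !hM' !(brDl, brDr, brZl, brZr) ?(b11, b22, b33, b21, b31, b32, hb12, hb13, hb23) in E12.
rewrite hb13 ?(DD, DN, DZ) !hM' !(brDl, brDr, brZl, brZr) ?(b11, b22, b33, b21, b31, b32, hb12, hb13, hb23) in E13.
have e23a := congr1 (crd i1) E23. have e23b := congr1 (crd i2) E23.
have e12a := congr1 (crd i1) E12. have e12b := congr1 (crd i2) E12.
have e13a := congr1 (crd i1) E13. have e13b := congr1 (crd i2) E13.
rewrite ?(crdD, crdZ, crdN, crd0, crdx) /= in e23a e23b e12a e12b e13a e13b.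
move: e23a e23b e12a e12b e13a e13b.
set m00 := M i0 i0; set m01 := M i0 i1; set m02 := M i0 i2.
set m10 := M i1 i0; set m11 := M i1 i1; set m12 := M i1 i2.
set m20 := M i2 i0; set m21 := M i2 i1; set m22 := M i2 i2.
rewrite !(mulr0, mulr1, addr0, add0r, subr0, mul0r) => e23a e23b e12a e12b e13a e13b.
have hli : lam^-1 != 0 by rewrite invr_neq0.
have hm01 : m01 = a * lam * m02.
  apply/eqP; rewrite -subr_eq0; apply/eqP.
  have -> : m01 - a * lam * m02 = lam * (m01 / lam + m02 * - a) by field.
  by rewrite -e23a mulr0.
have hm02 : m02 = 0.
  have h : m02 * (lam * (a^+2 + 1)) = m01 * a + m02 * - - lam by rewrite hm01; ring.
  rewrite -e23b in h; move/eqP: h; rewrite !mulf_eq0 (negbTE hl) /=.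
  have -> : (a ^+ 2 + 1 == 0) = false.
    by apply/negbTE; rewrite gt_eqF // ltr_pwDr // sqr_ge0.
  by rewrite orbF => /eqP.
have hm01' : m01 = 0 by rewrite hm01 hm02 mulr0.
have h1 : lam * (m22 - m00 - m11) = 0.
  have -> : lam * (m22 - m00 - m11) = (m00 * - lam + (m11 * - lam + m21 * a)) - (a * m21 - lam * m22) by ring.
  by rewrite -e12b subrr.
have h2 : lam^-1 * (m11 - m00 - m22) = 0.
  have -> : lam^-1 * (m11 - m00 - m22) = (lam^-1 * m11 + a * m12) - (m00/lam + (m12*a + m22/lam)) by ring.
  by rewrite e13a subrr.
move/eqP: h1; rewrite mulf_eq0 (negbTE hl) /= => /eqP h1.
move/eqP: h2; rewrite mulf_eq0 (negbTE hli) /= => /eqP h2.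
have hm00 : m00 = 0 by lra.
have hm22 : m22 = m11 by lra.
have hm21 : m21 = - (lam ^+ 2 * m12).
  have h3 : lam^-1 * (m21 + lam^+2 * m12) = (m00 * a + (m11 * a + m21 / lam)) - (a * m11 - lam * m12).
    by rewrite hm00; field.
  rewrite -e12a subrr in h3.
  move/eqP: h3; rewrite mulf_eq0 (negbTE hli) /= addr_eq0 => /eqP //.
exists m10, m11, m12, m20; apply/matrixP => i j; rewrite !mxE.
case: (ord3 i) => [->|[->|->]]; case: (ord3 j) => [->|[->|->]] /=;
  first [exact: hm00 | exact: hm01' | exact: hm02 | exact: hm21 | exact: hm22 | done].
Qed.
Lemma vec3_neq0 p q r : (p != 0) || (q != 0) || (r != 0) -> vec3 p q r != 0.
Proof.
move=> h; apply/negP => /eqP /vec3_0 [hp hq hr].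
by move: h; rewrite hp hq hr eqxx.
Qed.

Definition E1 := vec3 1 0 0.
Definition E2 := vec3 0 1 0.
Definition E3 := vec3 0 0 1.

Lemma ipv (ip : 'rV[R]_3 -> 'rV[R]_3 -> R)
  (hip1 : forall (c : R) u v w, ip (c *: u + v) w = c * ip u w + ip v w)
  (hsym : forall u v, ip u v = ip v u) p q r p' q' r' :
  ip (vec3 p q r) (vec3 p' q' r') =
  p * p' * ip E1 E1 + (p * q' + q * p') * ip E1 E2 + (p * r' + r * p') * ip E1 E3
  + q * q' * ip E2 E2 + (q * r' + r * q') * ip E2 E3 + r * r' * ip E3 E3.
Proof.
have ip0 w : ip 0 w = 0.
  have := hip1 1 0 0 w; rewrite scaler0 addr0 mul1r => h.
  by apply: (addrI (ip 0 w)); rewrite addr0 -h.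
have dec a b c : vec3 a b c = a *: E1 + (b *: E2 + (c *: E3 + 0)).
  by rewrite addr0 /E1 /E2 /E3 !vec3Z !vec3D; apply: vec3_eq; ring.
rewrite (dec p q r) !hip1 ip0.
rewrite (hsym E1) (hsym E2) (hsym E3) (dec p' q' r') !hip1 !ip0.
rewrite (hsym E2 E1) (hsym E3 E1) (hsym E3 E2).
ring.
Qed.
End S.

Unset Implicit Arguments. Set Strict Implicit.

Theorem proposition4p10 (R : realType) (a : R) (ha : 0 <= a)
  (ip : 'rV[R]_3 -> 'rV[R]_3 -> R) (hip : is_inner_product ip) :
  exists (lam k : R) (x : 'I_3 -> 'rV[R]_3),
    1 <= lam /\ 0 < k /\
    (forall i j, k * ip (x i) (x j) = (i == j)%:R) /\
    r3a_bracket a (x i0) (x i1) = a *: x i1 - lam *: x i2 /\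
    r3a_bracket a (x i0) (x i2) = lam^-1 *: x i1 + a *: x i2 /\
    r3a_bracket a (x i1) (x i2) = 0 /\
    (forall M : 'M[R]_3,
      (exists D : 'rV[R]_3 -> 'rV[R]_3,
         is_derivation (r3a_bracket a) D /\
         (forall j, D (x j) = \sum_(i < 3) M i j *: x i))
      <-> exists x21 x22 x23 x31 : R, M = der_mat lam x21 x22 x23 x31).
Proof.
case: hip => hip1 [hsym hpos].
have ipv' := ipv hip1 hsym.
set g11 := ip (E1 R) (E1 R) in ipv'; set g12 := ip (E1 R) (E2 R) in ipv'.
set g13 := ip (E1 R) (E3 R) in ipv'; set g22 := ip (E2 R) (E2 R) in ipv'.
set g23 := ip (E2 R) (E3 R) in ipv'; set g33 := ip (E3 R) (E3 R) in ipv'.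
have hpos3 p q r : (p != 0) || (q != 0) || (r != 0) -> 0 < ip (vec3 p q r) (vec3 p q r).
  by move=> h; apply: hpos; apply: vec3_neq0.
have g33p : 0 < g33.
  by have := hpos3 0 0 1; rewrite ipv' oner_neq0 orbT => /(_ isT); congr (_ < _); ring.
pose d := g22 * g33 - g23 ^+ 2.
have dp : 0 < d.
  have := hpos3 0 g33 (- g23); rewrite ipv' (gt_eqF g33p) orbT => /(_ isT) h.
  have : 0 < g33 * d by move: h; congr (_ < _); rewrite /d; ring.
  by rewrite pmulr_rgt0.
have dn0 : d != 0 by rewrite gt_eqF.
pose al := (g13 * g23 - g12 * g33) / d.
pose be := (g12 * g23 - g13 * g22) / d.
pose x1 := vec3 1 al be.
have ho1 q r : ip x1 (vec3 0 q r) = 0.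
  by rewrite /x1 ipv' /al /be /d; field; rewrite -/d.
have ho1' q r : ip (vec3 0 q r) x1 = 0 by rewrite hsym ho1.
pose P := ip x1 x1.
have Pp : 0 < P by rewrite /P /x1 hpos3 // oner_neq0.
pose N s t := ip (vec3 0 s t) (vec3 0 s t).
pose Q s t := ip (vec3 0 s t) (vec3 0 t (- s)).
have [s [t [hst [hQ hN]]]] : exists s t, 0 < s ^+ 2 + t ^+ 2 /\ Q s t = 0 /\ N s t <= N t (- s).
  have Qe s t : Q s t = g23 * (t^+2 - s^+2) + s * t * (g22 - g33) by rewrite /Q ipv'; ring.
  have Ne s t : N s t = s^+2 * g22 + 2 * s * t * g23 + t^+2 * g33 by rewrite /N ipv'; ring.
  have [s0 [t0 [hst0 hQ0]]] : exists s t, 0 < s^+2 + t^+2 /\ Q s t = 0.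
    case: (eqVneq g23 0) => hg.
    - exists 1, 0; rewrite Qe hg; split; last by ring.
      by have -> : (1:R)^+2 + 0^+2 = 1 by ring.
    - pose de := g33 - g22; pose r := Num.sqrt (de^+2 + 4 * g23^+2).
      exists (2 * g23), (de + r); split.
      + have h2 : 0 < g23 ^+ 2 by rewrite lt_def sqrf_eq0 hg sqr_ge0.
        have h3 : 0 <= (de + r) ^+ 2 by rewrite sqr_ge0.
        nra.
      + have hr : r^+2 = de^+2 + 4 * g23^+2.
          by rewrite sqr_sqrtr // addr_ge0 ?sqr_ge0 // mulr_ge0 ?sqr_ge0.
        rewrite Qe.
        have -> : g23 * ((de + r) ^+ 2 - (2 * g23) ^+ 2) + 2 * g23 * (de + r) * (g22 - g33)
          = g23 * (r^+2 - (de^+2 + 4 * g23^+2)) by rewrite /de; ring.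
        by rewrite hr subrr mulr0.
  case: (lerP (N s0 t0) (N t0 (- s0))) => h.
  - by exists s0, t0.
  - exists t0, (- s0); split; [|split].
    + by rewrite sqrrN addrC.
    + rewrite Qe; rewrite Qe in hQ0.
      have -> : g23 * ((- s0) ^+ 2 - t0 ^+ 2) + t0 * - s0 * (g22 - g33)
        = - (g23 * (t0 ^+ 2 - s0 ^+ 2) + s0 * t0 * (g22 - g33)) by ring.
      by rewrite hQ0 oppr0.
    + rewrite !Ne; rewrite !Ne in h; apply: ltW; move: h; congr (_ < _); ring.
have m1p : 0 < N s t.
  rewrite /N hpos3 //= eqxx /=.
  case: (eqVneq s 0) => [hs|//]; case: (eqVneq t 0) => [ht|]; last by rewrite orbT.
  by move: hst; rewrite hs ht expr0n /= addr0 ltxx.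
pose m1 := N s t; pose m2 := N t (- s).
have m2p : 0 < m2 by apply: lt_le_trans hN.
pose lam := Num.sqrt (m2 / m1); pose c := Num.sqrt (P / m1).
have hl2 : lam ^+ 2 = m2 / m1 by rewrite sqr_sqrtr // divr_ge0 // ltW.
have hc2 : c ^+ 2 = P / m1 by rewrite sqr_sqrtr // divr_ge0 // ltW.
have lam1 : 1 <= lam.
  rewrite /lam -sqrtr1 ler_sqrt; last by rewrite divr_ge0 // ltW.
  by rewrite ler_pdivlMr // mul1r.
have hl0 : lam != 0 by rewrite gt_eqF // (lt_le_trans ltr01).
have m1n : m1 != 0 by rewrite gt_eqF.
have Pn : P != 0 by rewrite gt_eqF.
pose x2 := vec3 0 (c * s) (c * t).
pose x3 := vec3 0 (- (c * t) / lam) ((c * s) / lam).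
pose x := fun i : 'I_3 => match nat_of_ord i with 0 => x1 | 1 => x2 | _ => x3 end.
pose k := P^-1.
have i11 : k * ip x1 x1 = 1 by rewrite mulVf.
have i22 : k * ip x2 x2 = 1.
  have -> : ip x2 x2 = c^+2 * m1 by rewrite /x2 /m1 /N !ipv'; ring.
  by rewrite hc2 /k; field; rewrite ?m1n ?Pn.
have i33 : k * ip x3 x3 = 1.
  have -> : ip x3 x3 = (c / lam)^+2 * m2 by rewrite /x3 /m2 /N !ipv'; field.
  have m2n : m2 != 0 by rewrite gt_eqF.
  by rewrite expr_div_n hc2 hl2 /k; field; rewrite ?m1n ?Pn ?m2n.
have i23 : ip x2 x3 = 0.
  have -> : ip x2 x3 = - (c^+2 / lam) * Q s t by rewrite /x2 /x3 /Q !ipv'; field.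
  by rewrite hQ mulr0.
have horth : forall i j, k * ip (x i) (x j) = (i == j)%:R.
  move=> i j; case: (ord3 i) => [->|[->|->]]; case: (ord3 j) => [->|[->|->]] /=;
    rewrite ?i11 ?i22 ?i33 ?ho1 ?ho1' ?i23 ?(hsym x3 x2) ?i23 ?mulr0 //.
have hb12 : r3a_bracket a x1 x2 = a *: x2 - lam *: x3.
  by rewrite /x1 /x2 /x3 br_vec3 !vec3Z vec3N vec3D; apply: vec3_eq; field.
have hb13 : r3a_bracket a x1 x3 = lam^-1 *: x2 + a *: x3.
  by rewrite /x1 /x2 /x3 br_vec3 !vec3Z vec3D; apply: vec3_eq; field.
have hb23 : r3a_bracket a x2 x3 = 0.
  by rewrite /x2 /x3 br_vec3 vec30; apply: vec3_eq; field.
exists lam, k, x; split; first exact: lam1.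
split; first by rewrite /k invr_gt0.
split; first exact: horth.
split; first exact: hb12.
split; first exact: hb13.
split; first exact: hb23.
move=> M; split.
- case=> D [hD hM]; exact: (der_fwd hip1 hl0 horth hb12 hb13 hb23 hD hM).
- case=> [x21 [x22 [x23 [x31 ->]]]]; apply: der_back => //=; rewrite /x1 /x2 /x3 !mxE //=.
Qed.
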